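(* Let $\Delta$, $A$, $p$ and $V$ be as in the context. If there exists $S=\{s_1,\dots,s_n\}\subset\Gamma$ with $(s_i|s_j)=\langle\alpha_i,\alpha_j\rangle \pmod p$ for all $i,j$ (and $s_i\ne s_j$ for $i\ne j$ if $p=2$), and the rank $m$ of $V$ satisfies $m<n$, then $p$ divides $\det(A)$.
   Context: Let $\Delta\subset\mathbb{R}^n$ be a simply laced root system of full rank (so $\langle\beta,\beta\rangle=2$ for all roots), with simple roots $\alpha_1,\dots,\alpha_n$, and let $A$ be the $n\times n$ integer matrix $A_{ij}=\langle\alpha_i,\alpha_j\rangle$. Let $p\ge2$ be an integer, $V$ a free $\mathbb{Z}/p$-module of rank $m$ with a symmetric bilinear form $(\cdot|\cdot)$ with values in $\mathbb{Z}/p$, and $\Gamma=\{x\in V\setminus\{0\}:(x|x)=2\}$. *)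

(* Defs.v *)
From HB Require Import structures.
From mathcomp Require Import all_boot all_order all_algebra.
From mathcomp Require Import reals.
Set Implicit Arguments. Unset Strict Implicit. Unset Printing Implicit Defensive.
Import Order.TTheory GRing.Theory Num.Theory.
Local Open Scope ring_scope.

Definition dotR (R : realType) (n : nat) (u v : 'rV[R]_n) : R :=
  \sum_(i < n) u 0 i * v 0 i.

Definition simply_laced_root_system (R : realType) (n : nat)
    (Delta : seq 'rV[R]_n) : Prop :=
  (0 : 'rV[R]_n) \notin Delta /\ [/\
      (forall v : 'rV[R]_n, exists c : 'I_(size Delta) -> R,
          v = \sum_(k < size Delta) c k *: Delta`_k),
      (forall a b, a \in Delta -> b \in Delta ->
          b - ((2 * dotR b a) / dotR a a) *: a \in Delta),
      (forall a b, a \in Delta -> b \in Delta ->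
          exists z : int, (2 * dotR b a) / dotR a a = z%:~R),
      (forall a (c : R), a \in Delta -> c *: a \in Delta -> c = 1 \/ c = -1)
    &
      (forall b, b \in Delta -> dotR b b = 2)].

Definition simple_roots (R : realType) (n : nat) (Delta : seq 'rV[R]_n)
    (alpha : 'I_n -> 'rV[R]_n) : Prop :=
  [/\ (forall i, alpha i \in Delta),
      (forall c : 'I_n -> R, \sum_(i < n) c i *: alpha i = 0 -> forall i, c i = 0)
    &
      (forall b, b \in Delta -> exists k : 'I_n -> int,
          b = \sum_(i < n) (k i)%:~R *: alpha i /\
          ((forall i, 0 <= k i) \/ (forall i, k i <= 0)))].

Definition symmetric_bilinear (p m : nat) (f : 'rV['Z_p]_m -> 'rV['Z_p]_m -> 'Z_p) : Prop :=
  (forall x y, f x y = f y x) /\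
  (forall (a : 'Z_p) x y z, f (a *: x + y) z = a * f x z + f y z).

Definition Gamma_set (p m : nat) (f : 'rV['Z_p]_m -> 'rV['Z_p]_m -> 'Z_p) (x : 'rV['Z_p]_m) : Prop :=
  x != 0 /\ f x x = 2%:R.

(* Main.v *)
Require Import Defs.
From HB Require Import structures.
From mathcomp Require Import all_boot all_order all_algebra.
From mathcomp Require Import reals.
Import Order.TTheory GRing.Theory Num.Theory.
Local Open Scope ring_scope.

Lemma det_thin0 (R : comPzRingType) (n m : nat) (X : 'M[R]_(n, m)) (Y : 'M[R]_(m, n)) :
  (m < n)%N -> \det (X *m Y) = 0.
Proof.
move=> lt; move: X Y.
have [k ->] : exists k, n = (m + k.+1)%N.
  by exists (n - m.+1)%N; rewrite addnS -addSn subnKC.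
move=> X Y.
have -> : X *m Y = row_mx X (0 : 'M_(m + k.+1, k.+1)) *m col_mx Y (0 : 'M_(k.+1, m + k.+1)).
  by rewrite mul_row_col mul0mx addr0.
rewrite det_mulmx (expand_det_col _ (rshift m (@ord0 k))) big1 ?mul0r // => i _.
by rewrite row_mxEr mxE mul0r.
Qed.

Lemma bilin_expand (p m : nat) (f : 'rV['Z_p]_m -> 'rV['Z_p]_m -> 'Z_p) :
  symmetric_bilinear f -> forall x y,
  f x y = \sum_(k < m) \sum_(l < m) x 0 k * y 0 l * f 'e_k 'e_l.
Proof.
move=> [fC fL].
have fD z : {morph (fun x => f x z) : a b / a + b >-> a + b}.
  by move=> a b /=; rewrite -[a in LHS]scale1r fL mul1r.
have f0 z : f 0 z = 0.
  have := fL 1 0 0 z; rewrite scale1r addr0 mul1r => /esym/eqP.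
  by rewrite -subr_eq0 addrK => /eqP.
have fZ a x z : f (a *: x) z = a * f x z by rewrite -[_ *: x]addr0 fL f0 addr0.
have lin x z : f x z = \sum_(k < m) x 0 k * f 'e_k z.
  rewrite {1}(row_sum_delta x) (big_morph (fun x => f x z) (fD z) (f0 z)).
  by apply: eq_bigr => k _; rewrite fZ.
move=> x y; rewrite lin; apply: eq_bigr => k _.
rewrite fC lin mulr_sumr; apply: eq_bigr => l _.
by rewrite fC mulrA [x 0 k * _]mulrC.
Qed.

Lemma Zp_intr0 (p : nat) (z : int) : (1 < p)%N -> (z%:~R : 'Z_p) = 0 -> (p%:Z %| z)%Z.
Proof.
move=> p1 hz.
have h : ((`|z|%N)%:R : 'Z_p) = 0.
  by move: hz; case: z => k //=; rewrite NegzE mulrNz => /eqP; rewrite oppr_eq0 => /eqP.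
rewrite dvdzE /=; move/(congr1 (@nat_of_ord _)): h; rewrite val_Zp_nat //= => h.
by rewrite /dvdn h.
Qed.

Theorem mainTheorem4 (R : realType) (n : nat) (Delta : seq 'rV[R]_n)
    (alpha : 'I_n -> 'rV[R]_n) (A : 'M[int]_n)
    (p m : nat) (f : 'rV['Z_p]_m -> 'rV['Z_p]_m -> 'Z_p)
    (s : 'I_n -> 'rV['Z_p]_m) :
  simply_laced_root_system Delta ->
  simple_roots Delta alpha ->
  (forall i j, (A i j)%:~R = dotR (alpha i) (alpha j)) ->
  (1 < p)%N ->
  symmetric_bilinear f ->
  (forall i, Gamma_set f (s i)) ->
  (forall i j, f (s i) (s j) = (A i j)%:~R) ->
  (p = 2%N -> injective s) ->
  (m < n)%N ->
  (p%:Z %| \det A)%Z.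
Proof.
move=> _ _ _ p1 fb _ hs _ lt.
apply: (@Zp_intr0 p (\det A) p1).
pose X : 'M['Z_p]_(n, m) := \matrix_(i, k) s i 0 k.
pose B : 'M['Z_p]_m := \matrix_(k, l) f 'e_k 'e_l.
have eA : map_mx (intr : int -> 'Z_p) A = X *m (B *m X^T).
  apply/matrixP => i j; rewrite !mxE -hs (@bilin_expand p m f fb).
  apply: eq_bigr => k _; rewrite !mxE mulr_sumr; apply: eq_bigr => l _.
  by rewrite !mxE -mulrA [f _ _ * _]mulrC.
rewrite -det_map_mx eA.
exact: det_thin0.
Qed.
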